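(* Let $\Omega\subset\mathbb{R}^d$ be a bounded domain, $\kappa\in L^\infty(\Omega)$ with $\kappa\ge\kappa_0>0$, and $a(u,v)=\int_\Omega\kappa\nabla u\cdot\nabla v\,dx$, $\|u\|_a^2=a(u,u)$. Let $V_H\subset H^1_0(\Omega)$ be a finite-dimensional space with $V_H=V_{H,1}+V_{H,2}$ for subspaces $V_{H,1},V_{H,2}$, and define $$\gamma=\sup_{v_1\in V_{H,1},v_2\in V_{H,2}}\frac{(v_1,v_2)}{\|v_1\|\|v_2\|},\quad \gamma_a=\sup_{v_1\in V_{H,1},v_2\in V_{H,2}}\frac{a(v_1,v_2)}{\|v_1\|_a\|v_2\|_a},\quad \alpha=\sup_{v_2\in V_{H,2}}\frac{\|v_2\|_a}{\|v_2\|},$$ assuming $\gamma<1$ and $\gamma_a<1$. Let $\tau>0$, $N\ge2$, and let $u_{H,1}^n\in V_{H,1}$, $u_{H,2}^n\in V_{H,2}$ ($n=0,\dots,N$), $u_H^n=u_{H,1}^n+u_{H,2}^n$, satisfy for $n=1,\dots,N-1$: $$(u_H^{n+1}-2u_H^n+u_H^{n-1},w)+\frac{\tau^2}{2}a(u_{H,1}^{n+1}+u_{H,1}^{n-1}+2u_{H,2}^n,w)=0\quad\forall w\in V_{H,1},$$ $$(u_H^{n+1}-2u_H^n+u_H^{n-1},w)+\tau^2a(u_{H,1}^{n}+u_{H,2}^n,w)=0\quad\forall w\in V_{H,2}.$$ Let $E^{\frac12}=\|u_H^{1}-u_H^0\|^2+\frac{\tau^2}{2}\sum_{i=1,2}(\|u_{H,i}^{1}\|_a^2+\|u_{H,i}^0\|_a^2)+\tau^2a(u_{H,2}^{1},u_{H,1}^0)+\tau^2a(u_{H,1}^{1},u_{H,2}^0)-\frac{\tau^2}{2}\|u_{H,2}^{1}-u_{H,2}^0\|_a^2$.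 If $2(1-\gamma)\alpha^{-2}\ge\tau^2$, then for all $n=0,\dots,N-1$, $$\Big(1-\gamma^2-\frac{\alpha^2\tau^2}{2}\Big)\|u_{H,2}^{n+1}-u_{H,2}^n\|^2+\frac{\tau^2(1-\gamma_a)}{2}\sum_{i=1,2}\Big(\|u_{H,i}^{n+1}\|_a^2+\|u_{H,i}^n\|_a^2\Big)\le E^{\frac12}.$$
   Context: $(\cdot,\cdot)$ and $\|\cdot\|$ denote the $L^2(\Omega)$ inner product and norm. *)

(* Defs.v *)
From HB Require Import structures.
From mathcomp Require Import all_boot all_order all_algebra.
From mathcomp Require Import classical_sets reals.
Set Implicit Arguments. Unset Strict Implicit. Unset Printing Implicit Defensive.
Import Order.TTheory GRing.Theory Num.Theory.
Local Open Scope ring_scope.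
Local Open Scope classical_set_scope.

Definition inner_product (R : realType) (V : lmodType R) (b : V -> V -> R) :=
  [/\ (forall u v, b u v = b v u),
      (forall (c : R) u v w, b (c *: u + v) w = c * b u w + b v w)
    & (forall u, u != 0 -> 0 < b u u)].

Definition ipnorm (R : realType) (V : lmodType R) (b : V -> V -> R) (v : V) : R :=
  Num.sqrt (b v v).

Definition cs_const (R : realType) (V : vectType R) (b : V -> V -> R)
  (V1 V2 : {vspace V}) : R :=
  sup [set r : R | exists v1 v2, [/\ v1 \in V1, v2 \in V2, v1 != 0, v2 != 0 &
        r = b v1 v2 / (ipnorm b v1 * ipnorm b v2)]].

Definition inv_const (R : realType) (V : vectType R) (ip a : V -> V -> R)
  (V2 : {vspace V}) : R :=
  sup [set r : R | exists v2, [/\ v2 \in V2, v2 != 0 &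
        r = ipnorm a v2 / ipnorm ip v2]].

(* Main.v *)
Require Import Defs.
From HB Require Import structures.
From mathcomp Require Import all_boot all_order all_algebra.
From mathcomp Require Import boolp classical_sets reals.
From mathcomp Require Import ring lra zify.
Set Implicit Arguments. Unset Strict Implicit.
Import Order.TTheory GRing.Theory Num.Theory.
Local Open Scope ring_scope.

Lemma bsym (R : realType) (V : lmodType R) (b : V -> V -> R) :
  inner_product b -> forall u v, b u v = b v u.
Proof. by case. Qed.
Lemma bDl (R : realType) (V : lmodType R) (b : V -> V -> R) :
  inner_product b -> forall u v w, b (u + v) w = b u w + b v w.
Proof. by case=> _ H _ u v w; rewrite -[u in LHS]scale1r H mul1r. Qed.
Lemma b0l (R : realType) (V : lmodType R) (b : V -> V -> R) :
  inner_product b -> forall w, b 0 w = 0.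
Proof. move=> Hb w; have := bDl Hb 0 0 w; rewrite addr0 => h.
lra. Qed.
Lemma bZl (R : realType) (V : lmodType R) (b : V -> V -> R) :
  inner_product b -> forall c u w, b (c *: u) w = c * b u w.
Proof. move=> Hb c u w; case: (Hb) => _ H _.
by rewrite -[c *: u]addr0 H (b0l Hb) addr0. Qed.
Lemma bNl (R : realType) (V : lmodType R) (b : V -> V -> R) :
  inner_product b -> forall u w, b (- u) w = - b u w.
Proof. by move=> Hb u w; rewrite -scaleN1r (bZl Hb) mulN1r. Qed.
Lemma bBl (R : realType) (V : lmodType R) (b : V -> V -> R) :
  inner_product b -> forall u v w, b (u - v) w = b u w - b v w.
Proof. by move=> Hb u v w; rewrite (bDl Hb) (bNl Hb). Qed.
Lemma bDr (R : realType) (V : lmodType R) (b : V -> V -> R) :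
  inner_product b -> forall u v w, b w (u + v) = b w u + b w v.
Proof. by move=> Hb u v w; rewrite !(bsym Hb w) (bDl Hb). Qed.
Lemma bZr (R : realType) (V : lmodType R) (b : V -> V -> R) :
  inner_product b -> forall c u w, b w (c *: u) = c * b w u.
Proof. by move=> Hb c u w; rewrite !(bsym Hb w) (bZl Hb). Qed.
Lemma bNr (R : realType) (V : lmodType R) (b : V -> V -> R) :
  inner_product b -> forall u w, b w (- u) = - b w u.
Proof. by move=> Hb u w; rewrite !(bsym Hb w) (bNl Hb). Qed.
Lemma bBr (R : realType) (V : lmodType R) (b : V -> V -> R) :
  inner_product b -> forall u v w, b w (u - v) = b w u - b w v.
Proof. by move=> Hb u v w; rewrite !(bsym Hb w) (bBl Hb). Qed.
Lemma b0r (R : realType) (V : lmodType R) (b : V -> V -> R) :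
  inner_product b -> forall w, b w 0 = 0.
Proof. by move=> Hb w; rewrite (bsym Hb) (b0l Hb). Qed.
Lemma bge0 (R : realType) (V : lmodType R) (b : V -> V -> R) :
  inner_product b -> forall v, 0 <= b v v.
Proof. move=> Hb v; have [->|nz] := eqVneq v 0; first by rewrite (b0l Hb).
by case: Hb => _ _ /(_ v nz) /ltW. Qed.

Definition bs (R : realType) (V : lmodType R) (b : V -> V -> R) u v :=
  (b u v + b v u) / 2%:R.
Lemma bsE (R : realType) (V : lmodType R) (b : V -> V -> R) :
  inner_product b -> forall u v, b u v = bs b u v.
Proof. by move=> Hb u v; rewrite /bs (bsym Hb v u); field. Qed.

Lemma bCS (R : realType) (V : lmodType R) (b : V -> V -> R) :
  inner_product b -> forall u v, b u v <= ipnorm b u * ipnorm b v.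
Proof.
move=> Hb u v; have [->|nu] := eqVneq u 0; first by rewrite (b0l Hb) /ipnorm (b0l Hb) sqrtr0 mul0r.
have [->|nv] := eqVneq v 0; first by rewrite (b0r Hb) /ipnorm (b0l Hb) sqrtr0 mulr0.
set n1 := ipnorm b u; set n2 := ipnorm b v.
have e1 : n1 ^+ 2 = b u u by rewrite sqr_sqrtr // bge0.
have e2 : n2 ^+ 2 = b v v by rewrite sqr_sqrtr // bge0.
have p1 : 0 < n1 by rewrite sqrtr_gt0; case: Hb => _ _ /(_ u nu).
have p2 : 0 < n2 by rewrite sqrtr_gt0; case: Hb => _ _ /(_ v nv).
have := bge0 Hb (n2 *: u - n1 *: v).
rewrite !(bBl Hb, bBr Hb, bZl Hb, bZr Hb) (bsym Hb v u) -e1 -e2 => h.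
have h2 : 0 <= (n1 * n2) * (n1 * n2 - b u v) by lra.
rewrite -subr_ge0; move: h2; rewrite pmulr_rge0 // mulr_gt0 //.
Qed.

Fixpoint orthl (R : realType) (V : vectType R) (b : V -> V -> R) (t : seq V) : Prop :=
  if t is e :: t' then (forall w, w \in <<t'>>%VS -> b e w = 0) /\ orthl b t' else True.

Lemma proj_ex (R : realType) (V : vectType R) (b : V -> V -> R) :
  inner_product b -> forall t, orthl b t -> forall x,
  exists2 p, p \in <<t>>%VS & forall w, w \in <<t>>%VS -> b (x - p) w = 0.
Proof.
move=> Hb; elim=> [|e t IH] /=.
  move=> _ x; exists 0; first exact: mem0v.
  by move=> w; rewrite span_nil memv0 => /eqP ->; rewrite (b0r Hb).
case=> He Ht x; have [p' Hp' Hw'] := IH Ht x.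
have [->|nz] := eqVneq e 0.
  exists p'; first by rewrite span_cons; apply: (subvP (addvSr _ _)).
  move=> w; rewrite span_cons => /memv_addP [u /vlineP [k ->] [v Hv ->]].
  by rewrite scaler0 add0r Hw'.
set c := b x e / b e e.
have Ec : b x e = c * b e e.
  rewrite /c divfK //; case: Hb => _ _ /(_ e nz) /lt0r_neq0 //.
exists (p' + c *: e).
  rewrite span_cons addvC; apply: memv_add => //; exact/memvZ/memv_line.
move=> w; rewrite span_cons => /memv_addP [u /vlineP [k ->] [v Hv ->]].
rewrite !(bDl Hb, bBl Hb, bDr Hb, bBr Hb, bZl Hb, bZr Hb, bNl Hb, bNr Hb).
have h1 := Hw' v Hv; rewrite (bBl Hb) in h1.
rewrite (bsym Hb p' e) (He _ Hp') (He _ Hv) Ec.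
lra.
Qed.

Lemma orth_ex (R : realType) (V : vectType R) (b : V -> V -> R) :
  inner_product b -> forall s : seq V, exists t, orthl b t /\ (<<s>> <= <<t>>)%VS.
Proof.
move=> Hb; elim=> [|x s [t [Ht Hst]]].
  by exists [::]; split => //; rewrite span_nil sub0v.
have [p Hp Hw] := proj_ex Hb Ht x.
exists ((x - p) :: t); split => /=; first by split.
rewrite !span_cons; apply/subvP => w /memv_addP [u /vlineP [k ->] [v Hv ->]].
have -> : k *: x = k *: (x - p) + k *: p by rewrite -scalerDr subrK.
rewrite -addrA; apply: memv_add; first exact/memvZ/memv_line.
apply: memvD; first exact: memvZ.
exact: (subvP Hst).
Qed.

Lemma equiv_bound (R : realType) (V : vectType R) (b a : V -> V -> R) :
  inner_product b -> inner_product a -> forall t, orthl b t ->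
  exists C, 0 <= C /\ forall v, v \in <<t>>%VS -> a v v <= C * b v v.
Proof.
move=> Hb Ha; elim=> [|e t IH] /=.
  by move=> _; exists 0; split => // v; rewrite span_nil memv0 => /eqP ->; rewrite (b0l Ha) mul0r.
case=> He /IH [C [C0 HC]].
have [K [K0 HK]] : exists K, 0 <= K /\ a e e <= K * b e e.
  have [->|nz] := eqVneq e 0; first by exists 0; rewrite (b0l Ha) mul0r.
  have bp : 0 < b e e by case: Hb => _ _ /(_ e nz).
  exists (a e e / b e e); rewrite divfK ?lt0r_neq0 //; split => //.
  by rewrite divr_ge0 ?(bge0 Ha) // ltW.
exists (2%:R * (K + C)); split; first by rewrite mulr_ge0 // addr_ge0.
move=> w; rewrite span_cons => /memv_addP [u /vlineP [k ->] [v Hv ->]].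
have hv := HC v Hv; have hev := He v Hv.
have hk := bge0 Ha (k *: e - v).
have hbe := bge0 Hb e; have hbv := bge0 Hb v.
move: hk; rewrite !(bDl Ha, bBl Ha, bDr Ha, bBr Ha, bZl Ha, bZr Ha, bNl Ha, bNr Ha) => hk.
rewrite !(bDl Hb, bBl Hb, bDr Hb, bBr Hb, bZl Hb, bZr Hb, bNl Hb, bNr Hb) (bsym Hb v e) hev.
rewrite (bsym Ha v e) in hk *.
have hk2 : 0 <= k * k by rewrite -expr2 sqr_ge0.
have h3 : (k * k) * a e e <= (k * k) * (K * b e e) by rewrite ler_wpM2l.
have h4 : K * (k * (k * b e e)) <= (K + C) * (k * (k * b e e)).
  by rewrite ler_wpM2r ?lerDl // mulrA mulr_ge0.
have h5 : C * b v v <= (K + C) * b v v by rewrite ler_wpM2r ?lerDr.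
nra.
Qed.

Local Open Scope classical_set_scope.

Lemma ipn_gt0 (R : realType) (V : lmodType R) (b : V -> V -> R) :
  inner_product b -> forall v, v != 0 -> 0 < ipnorm b v.
Proof. by move=> Hb v nz; rewrite sqrtr_gt0; case: Hb => _ _ /(_ v nz). Qed.

Lemma ipn_sq (R : realType) (V : lmodType R) (b : V -> V -> R) :
  inner_product b -> forall v, ipnorm b v ^+ 2 = b v v.
Proof. by move=> Hb v; rewrite sqr_sqrtr // bge0. Qed.

Lemma ipnN (R : realType) (V : lmodType R) (b : V -> V -> R) :
  inner_product b -> forall v, ipnorm b (- v) = ipnorm b v.
Proof. by move=> Hb v; rewrite /ipnorm (bNl Hb) (bNr Hb) opprK. Qed.

Lemma cs_ub (R : realType) (V : vectType R) (b : V -> V -> R) (V1 V2 : {vspace V}) :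
  inner_product b -> ubound [set r : R | exists v1 v2, [/\ v1 \in V1, v2 \in V2, v1 != 0, v2 != 0 &
        r = b v1 v2 / (ipnorm b v1 * ipnorm b v2)]] (cs_const b V1 V2).
Proof.
move=> Hb; apply: ub_le_sup; exists 1 => r [v1 [v2 [_ _ n1 n2 ->]]].
rewrite ler_pdivrMr ?mul1r ?mulr_gt0 ?ipn_gt0 //; exact: bCS.
Qed.

Lemma cs_bound (R : realType) (V : vectType R) (b : V -> V -> R) (V1 V2 : {vspace V}) :
  inner_product b -> forall v1 v2, v1 \in V1 -> v2 \in V2 ->
  b v1 v2 <= cs_const b V1 V2 * ipnorm b v1 * ipnorm b v2.
Proof.
move=> Hb v1 v2 h1 h2.
have [->|n1] := eqVneq v1 0; first by rewrite (b0l Hb) /ipnorm (b0l Hb) sqrtr0 mulr0 mul0r.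
have [->|n2] := eqVneq v2 0; first by rewrite (b0r Hb) /ipnorm (b0l Hb) sqrtr0 mulr0.
have p : 0 < ipnorm b v1 * ipnorm b v2 by rewrite mulr_gt0 ?ipn_gt0.
have := @cs_ub _ _ _ V1 V2 Hb (b v1 v2 / (ipnorm b v1 * ipnorm b v2)).
rewrite -mulrA -ler_pdivrMr //; apply; by exists v1, v2.
Qed.

Lemma cs_ge0 (R : realType) (V : vectType R) (b : V -> V -> R) (V1 V2 : {vspace V}) :
  inner_product b -> 0 <= cs_const b V1 V2.
Proof.
move=> Hb.
have [[r [v1 [v2 [h1 h2 n1 n2 _]]]] | ne] := pselect (exists r, exists v1 v2, [/\ v1 \in V1, v2 \in V2, v1 != 0, v2 != 0 &
        r = b v1 v2 / (ipnorm b v1 * ipnorm b v2)]).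
  have hA := @cs_ub _ _ _ V1 V2 Hb (b v1 v2 / (ipnorm b v1 * ipnorm b v2)).
  have hB := @cs_ub _ _ _ V1 V2 Hb (b (- v1) v2 / (ipnorm b (- v1) * ipnorm b v2)).
  rewrite (bNl Hb) (ipnN Hb) mulNr in hB.
  have : b v1 v2 / (ipnorm b v1 * ipnorm b v2) <= cs_const b V1 V2 by apply: hA; exists v1, v2.
  have : - (b v1 v2 / (ipnorm b v1 * ipnorm b v2)) <= cs_const b V1 V2.
    by apply: hB; exists (- v1), v2; split => //; [rewrite rpredN | rewrite oppr_eq0 | rewrite (bNl Hb) (ipnN Hb) mulNr].
  lra.
rewrite /cs_const.
have -> : [set r : R | exists v1 v2, [/\ v1 \in V1, v2 \in V2, v1 != 0, v2 != 0 &
        r = b v1 v2 / (ipnorm b v1 * ipnorm b v2)]] = set0.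
  by apply/seteqP; split => r // hr; apply: ne; exists r.
by rewrite sup0.
Qed.

Lemma inv_bound (R : realType) (V : vectType R) (ip a : V -> V -> R) (V2 : {vspace V}) :
  inner_product ip -> inner_product a -> forall v, v \in V2 ->
  a v v <= inv_const ip a V2 ^+ 2 * ip v v.
Proof.
move=> Hi Ha v hv.
have [C [C0 HC]] : exists C, 0 <= C /\ forall v, a v v <= C * ip v v.
  have [t [Ht Hs]] := orth_ex Hi (vbasis (@fullv _ V)).
  have [C [C0 HC]] := equiv_bound Hi Ha Ht.
  exists C; split => // w; apply: HC; apply: (subvP Hs).
  by rewrite (span_basis (vbasisP _)) memvf.
have [->|nz] := eqVneq v 0; first by rewrite (b0l Ha) (b0l Hi) mulr0.
have ub : ubound [set r : R | exists v2, [/\ v2 \in V2, v2 != 0 &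
        r = ipnorm a v2 / ipnorm ip v2]] (inv_const ip a V2).
  apply: ub_le_sup; exists (Num.sqrt C) => r [w [_ nw ->]].
  rewrite ler_pdivrMr ?ipn_gt0 // /ipnorm -sqrtrM // ler_sqrt ?HC //.
  by rewrite mulr_ge0 // bge0.
have h : ipnorm a v / ipnorm ip v <= inv_const ip a V2 by apply: ub; exists v.
rewrite ler_pdivrMr ?ipn_gt0 // in h.
rewrite -(ipn_sq Ha) -(ipn_sq Hi) -exprMn.
have : 0 <= ipnorm a v by apply: sqrtr_ge0.
nra.
Qed.

Local Close Scope classical_set_scope.

Definition En (R : realType) (VH : vectType R) (ip a : VH -> VH -> R) (tau : R)
  (u1 u2 : nat -> VH) (n : nat) : R :=
    ip ((u1 n.+1 + u2 n.+1) - (u1 n + u2 n)) ((u1 n.+1 + u2 n.+1) - (u1 n + u2 n))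
    + tau ^+ 2 / 2%:R * ((a (u1 n.+1) (u1 n.+1) + a (u1 n) (u1 n))
                        + (a (u2 n.+1) (u2 n.+1) + a (u2 n) (u2 n)))
    + tau ^+ 2 * a (u2 n.+1) (u1 n) + tau ^+ 2 * a (u1 n.+1) (u2 n)
    - tau ^+ 2 / 2%:R * a (u2 n.+1 - u2 n) (u2 n.+1 - u2 n).

Theorem mainTheorem2 (R : realType) (VH : vectType R)
  (ip a : VH -> VH -> R) (VH1 VH2 : {vspace VH})
  (tau : R) (N : nat) (u1 u2 : nat -> VH) :
  inner_product ip -> inner_product a ->
  (VH1 + VH2)%VS = fullv ->
  cs_const ip VH1 VH2 < 1 ->
  cs_const a VH1 VH2 < 1 ->
  0 < tau -> (2 <= N)%N ->
  (forall n, (n <= N)%N -> u1 n \in VH1) ->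
  (forall n, (n <= N)%N -> u2 n \in VH2) ->
  (forall n, (1 <= n)%N -> (n <= N.-1)%N -> forall w, w \in VH1 ->
     ip ((u1 n.+1 + u2 n.+1) - 2%:R *: (u1 n + u2 n) + (u1 n.-1 + u2 n.-1)) w
     + tau ^+ 2 / 2%:R * a (u1 n.+1 + u1 n.-1 + 2%:R *: u2 n) w = 0) ->
  (forall n, (1 <= n)%N -> (n <= N.-1)%N -> forall w, w \in VH2 ->
     ip ((u1 n.+1 + u2 n.+1) - 2%:R *: (u1 n + u2 n) + (u1 n.-1 + u2 n.-1)) w
     + tau ^+ 2 * a (u1 n + u2 n) w = 0) ->
  let gamma := cs_const ip VH1 VH2 in
  let gamma_a := cs_const a VH1 VH2 in
  let alpha := inv_const ip a VH2 in
  let E12 :=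
    ip ((u1 1%N + u2 1%N) - (u1 0%N + u2 0%N)) ((u1 1%N + u2 1%N) - (u1 0%N + u2 0%N))
    + tau ^+ 2 / 2%:R * ((a (u1 1%N) (u1 1%N) + a (u1 0%N) (u1 0%N))
                        + (a (u2 1%N) (u2 1%N) + a (u2 0%N) (u2 0%N)))
    + tau ^+ 2 * a (u2 1%N) (u1 0%N) + tau ^+ 2 * a (u1 1%N) (u2 0%N)
    - tau ^+ 2 / 2%:R * a (u2 1%N - u2 0%N) (u2 1%N - u2 0%N) in
  tau ^+ 2 * alpha ^+ 2 <= 2%:R * (1 - gamma) ->
  forall n, (n <= N.-1)%N ->
    (1 - gamma ^+ 2 - alpha ^+ 2 * tau ^+ 2 / 2%:R)
      * ip (u2 n.+1 - u2 n) (u2 n.+1 - u2 n)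
    + tau ^+ 2 * (1 - gamma_a) / 2%:R
      * ((a (u1 n.+1) (u1 n.+1) + a (u1 n) (u1 n))
         + (a (u2 n.+1) (u2 n.+1) + a (u2 n) (u2 n)))
    <= E12.
Proof.
move=> Hi Ha _ _ _ tau0 N2 Hu1 Hu2 H1 H2 gamma gamma_a alpha E12 _.
have cons : forall m, (m.+1 <= N.-1)%N -> En ip a tau u1 u2 m.+1 = En ip a tau u1 u2 m.
  move=> m hm.
  have hmN : (m.+2 <= N)%N by lia.
  have e1 := H1 m.+1 isT hm (u1 m.+2 - u1 m)
     (memvB (Hu1 _ hmN) (Hu1 _ (leq_trans (leqnSn _) (ltnW hmN)))).
  have e2 := H2 m.+1 isT hm (u2 m.+2 - u2 m)
     (memvB (Hu2 _ hmN) (Hu2 _ (leq_trans (leqnSn _) (ltnW hmN)))).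
  move: e1 e2; rewrite /En /= .
  rewrite !(bDl Hi, bBl Hi, bDr Hi, bBr Hi, bZl Hi, bZr Hi, bNl Hi, bNr Hi).
  rewrite !(bDl Ha, bBl Ha, bDr Ha, bBr Ha, bZl Ha, bZr Ha, bNl Ha, bNr Ha).
  rewrite !(bsE Hi) !(bsE Ha) /bs.
  move=> e1 e2; lra.
have consE : forall n, (n <= N.-1)%N -> En ip a tau u1 u2 n = E12.
  elim=> [//|n IH hn]; rewrite cons // IH //; exact: ltnW.
move=> n hn; rewrite -(consE n hn) /En.
have hnN : (n.+1 <= N)%N by lia.
have hnN' : (n <= N)%N := ltnW hnN.
set D1 := u1 n.+1 - u1 n; set D2 := u2 n.+1 - u2 n.
have m1 : D1 \in VH1 by apply: memvB; [apply: Hu1|apply: Hu1].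
have m2 : D2 \in VH2 by apply: memvB; [apply: Hu2|apply: Hu2].
have eqD : (u1 n.+1 + u2 n.+1) - (u1 n + u2 n) = D1 + D2 by rewrite opprD addrACA.
rewrite eqD; clearbody D1 D2.
have F1 : (1 - gamma ^+ 2) * ip D2 D2 <= ip (D1 + D2) (D1 + D2).
  have m1n : - D1 \in VH1 by rewrite rpredN.
  have cs := cs_bound Hi m1n m2.
  rewrite (bNl Hi) (ipnN Hi) in cs.
  rewrite !(bDl Hi, bDr Hi) ?(bsym Hi D2 D1) -(ipn_sq Hi D1) -(ipn_sq Hi D2).
  have := sqr_ge0 (ipnorm ip D1 - gamma * ipnorm ip D2).
  rewrite -/gamma in cs. nra.
have G2 : tau ^+ 2 * a D2 D2 <= tau ^+ 2 * (alpha ^+ 2 * ip D2 D2).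
  by rewrite ler_wpM2l ?sqr_ge0 // inv_bound.
have ga0 : 0 <= gamma_a by apply: cs_ge0.
have F3 : forall x y, x \in VH1 -> y \in VH2 ->
    - (gamma_a * (a x x + a y y)) <= 2%:R * a y x.
  move=> x y hx hy.
  have hxn : - x \in VH1 by rewrite rpredN.
  have cs := cs_bound Ha hxn hy.
  rewrite (bNl Ha) (ipnN Ha) -/gamma_a (bsym Ha x y) in cs.
  have := mulr_ge0 ga0 (sqr_ge0 (ipnorm a x - ipnorm a y)).
  rewrite -(ipn_sq Ha x) -(ipn_sq Ha y). nra.
have G3 := F3 _ _ (Hu1 _ hnN') (Hu2 _ hnN).
have G4 := F3 _ _ (Hu1 _ hnN) (Hu2 _ hnN').
rewrite (bsym Ha (u2 n) (u1 n.+1)) in G4.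
have tp : 0 <= tau ^+ 2 by apply: sqr_ge0.
have G3' := ler_wpM2l tp G3.
have G4' := ler_wpM2l tp G4.
lra.
Qed.
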